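(* Let $\mathcal{G}$ be a finite connected undirected simple graph with vertices $1,\dots,N$, let $p$ be a prime and $0\le\iota\le\kappa$ integers. If $h\in\mathcal{H}(\mathcal{G},p^\kappa)$ satisfies $p^\iota h(i)\equiv0\pmod{p^\kappa}$ for all $i$, then there exists $h'\in\mathcal{H}(\mathcal{G},p^\iota)$ with $h(i)\equiv p^{\kappa-\iota}h'(i)\pmod{p^\kappa}$ for all $i$.
   Context: The Laplacian $\nabla^2$ is the $N\times N$ integer matrix with $\nabla^2_{ii}=d_i$ (degree of $i$), $\nabla^2_{ij}=-1$ if $i,j$ adjacent, $0$ otherwise. $\mathbf{Z}_M=\{0,\dots,M-1\}$. $\mathcal{H}(\mathcal{G},M)$ denotes the set of functions $h:\{1,\dots,N\}\to\mathbf{Z}_M$ with $(\nabla^2h)(i)\equiv0\pmod M$ for all $i$. *)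

(* Defs.v *)
From mathcomp Require Import all_boot all_order all_algebra.
Set Implicit Arguments. Unset Strict Implicit. Unset Printing Implicit Defensive.
Import GRing.Theory Num.Theory.
Local Open Scope ring_scope.

(* A finite simple undirected graph on vertices 'I_N (= {0,..,N-1}, standing
   for 1..N) is given by a symmetric irreflexive adjacency relation e. *)
Definition simple_graph (N : nat) (e : rel 'I_N) : Prop :=
  symmetric e /\ irreflexive e.

Definition connected_graph (N : nat) (e : rel 'I_N) : Prop :=
  forall i j, connect e i j.

Definition deg (N : nat) (e : rel 'I_N) (i : 'I_N) : nat := #|[set j | e i j]|.

Definition laplacian (N : nat) (e : rel 'I_N) : 'M[int]_N :=
  \matrix_(i, j) (if i == j then (deg e i)%:Z else if e i j then -1 else 0).

Definition lap_apply (N : nat) (e : rel 'I_N) (h : 'I_N -> nat) (i : 'I_N) : int :=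
  \sum_j laplacian e i j * (h j)%:Z.

(* H(G, M): functions h : vertices -> Z_M = {0..M-1} with nabla^2 h = 0 mod M *)
Definition harmonic_mod (N : nat) (e : rel 'I_N) (M : nat) (h : 'I_N -> nat) : Prop :=
  (forall i, (h i < M)%N) /\ (forall i, (M%:Z %| lap_apply e h i)%Z).

(* Main.v *)
Require Import Defs.
From mathcomp Require Import all_boot all_order all_algebra.
Import GRing.Theory Num.Theory.

Theorem lemma2 (N : nat) (e : rel 'I_N) (Hsimple : simple_graph e)
  (Hconn : connected_graph e) (p : nat) (Hp : prime p) (iota kappa : nat)
  (Hik : (iota <= kappa)%N) (h : 'I_N -> nat)
  (Hh : harmonic_mod e (p ^ kappa) h)
  (Htor : forall i, (p ^ iota * h i = 0 %[mod p ^ kappa])%N) :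
  exists h' : 'I_N -> nat, harmonic_mod e (p ^ iota) h' /\
    forall i, (h i = p ^ (kappa - iota) * h' i %[mod p ^ kappa])%N.
Proof.
have p0 : (0 < p)%N by apply: prime_gt0.
set d := (p ^ (kappa - iota))%N.
have d0 : (0 < d)%N by rewrite expn_gt0 p0.
have hk : (p ^ kappa = p ^ iota * d)%N by rewrite /d -expnD subnKC.
have pi0 : (0 < p ^ iota)%N by rewrite expn_gt0 p0.
have Hdiv : forall i, (d %| h i)%N.
  move=> i; have := Htor i; rewrite mod0n => /eqP; rewrite -/(dvdn _ _) hk.
  by rewrite dvdn_pmul2l.
have Hhi : forall i, h i = (d * (h i %/ d))%N.
  by move=> i; rewrite mulnC divnK.
case: Hh => Hlt Hlap.
exists (fun i => (h i %/ d)%N); split; last by move=> i; rewrite -Hhi.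
split.
  move=> i; rewrite -(ltn_pmul2l d0) -Hhi mulnC -hk; exact: Hlt.
move=> i; have := Hlap i.
have -> : lap_apply e h i = (d%:Z * lap_apply e (fun i => (h i %/ d)%N) i)%R.
  rewrite /lap_apply mulr_sumr; apply: eq_bigr => j _.
  by rewrite {1}Hhi PoszM mulrCA.
rewrite hk PoszM (mulrC (Posz (p ^ iota))) dvdz_mul2l //.
by rewrite -lt0n.
Qed.
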